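(* For $n\ge 1$, let $\gamma(n)$ denote the number of partitions of $n$ having no part equal to $1$ and in which the largest part appears at least twice. Then for all $n\ge 3$, $$\gamma(n)\ \ge\ \gamma(n-2).$$
   Context: Partitions with no part equal to $1$ whose largest part occurs at least twice are called ground state non-unitary partitions; $\gamma(n)$ counts those of size $n$ (for $n\ge1$). *)

(* Defs.v *)
From mathcomp Require Import all_boot.
Set Implicit Arguments. Unset Strict Implicit. Unset Printing Implicit Defensive.

Definition is_partition (n : nat) (s : seq nat) : bool :=
  [&& sorted geq s, all (fun x => 0 < x) s & sumn s == n].

Definition gsnu (s : seq nat) : bool :=
  (1 \notin s) && (1 < count_mem (head 0 s) s).

(* A partition of n has at most n parts, each at most n; so partitions of n
   are enumerated by k-tuples over 'I_n.+1 for k <= n. *)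
Definition gamma (n : nat) : nat :=
  \sum_(k < n.+1)
    #|[set t : k.-tuple 'I_n.+1 |
        let s := map (@nat_of_ord n.+1) t in is_partition n s && gsnu s]|.

(* Main.v *)
Require Import Defs.
From mathcomp Require Import all_boot zify.

Lemma step_ok (m : nat) (s : seq nat) :
  is_partition m s && gsnu s -> is_partition m.+2 (rcons s 2) && gsnu (rcons s 2).
Proof.
case: s => [|x s]; first by rewrite /gsnu /= andbF.
rewrite /is_partition /gsnu => /andP[/and3P[Hs Hp /eqP Hsum] /andP[H1 Hc]].
have Hge2 : forall y, y \in x :: s -> 2 <= y.
  move=> y Hy; have := allP Hp y Hy; case: y Hy => [|[|y]] Hy //.
  by rewrite Hy in H1.
have A : is_partition m.+2 (rcons (x :: s) 2).
  apply/and3P; split.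
  - rewrite rcons_cons /= rcons_path (Hs : path geq x s) /=; apply: Hge2; exact: mem_last.
  - by rewrite all_rcons Hp.
  - by rewrite sumn_rcons Hsum addn2.
apply/andP; split; first exact: A.
apply/andP; split; first by rewrite mem_rcons in_cons.
rewrite rcons_cons /= -cats1 count_cat /=.
move: Hc => /=.
lia.
Qed.

Section Inj.
Variables (m k : nat).

Definition wid (i : 'I_m.+1) : 'I_m.+3 := widen_ord (leq_trans (leqnSn _) (leqnSn _)) i.

Lemma fsz (t : k.-tuple 'I_m.+1) :
  size (rcons (map wid t) (inord 2 : 'I_m.+3)) == k.+1.
Proof. by rewrite size_rcons size_map size_tuple. Qed.

Definition fT (t : k.-tuple 'I_m.+1) : k.+1.-tuple 'I_m.+3 := Tuple (fsz t).

Lemma fT_inj : injective fT.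
Proof.
move=> t1 t2 /(congr1 val) /= /rcons_inj [] /inj_map H.
apply: val_inj; apply: H => i j /(congr1 val) /=; exact: val_inj.
Qed.

Lemma fT_map (t : k.-tuple 'I_m.+1) :
  map (@nat_of_ord m.+3) (fT t) = rcons (map (@nat_of_ord m.+1) t) 2.
Proof.
rewrite /= map_rcons -map_comp inordK //; congr rcons.
Qed.

Lemma card_step :
  #|[set t : k.-tuple 'I_m.+1 |
        let s := map (@nat_of_ord m.+1) t in is_partition m s && gsnu s]|
  <= #|[set t : k.+1.-tuple 'I_m.+3 |
        let s := map (@nat_of_ord m.+3) t in is_partition m.+2 s && gsnu s]|.
Proof.
rewrite -(card_imset _ fT_inj); apply: subset_leq_card.
apply/subsetP => u /imsetP[t]; rewrite !inE => Ht ->.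
by rewrite fT_map; apply: step_ok.
Qed.
End Inj.

Theorem proposition1 (n : nat) : 3 <= n -> gamma (n - 2) <= gamma n.
Proof.
case: n => [|[|[|m]]] // _.
change (gamma m.+1 <= gamma m.+3); rewrite /gamma.
rewrite [X in _ <= X]big_ord_recl.
apply: (leq_trans _ (leq_addl _ _)).
rewrite [X in _ <= X]big_ord_recr /=.
apply: (leq_trans _ (leq_addr _ _)).
apply: leq_sum => i _.
exact: (card_step m.+1 i).
Qed.
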